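(* Let $G$ be a reaction network with one-dimensional stoichiometric subspace and suppose $cap_{pos}(G)<+\infty$. Let $\mathcal W_{nondeg}=\{(\kappa^*,c^* )\in\mathcal W:\text{for }(\kappa^*,c^* ),\text{ all positive steady states of }G\text{ in }\mathcal P_{c^*}\text{ are nondegenerate}\}$. Then $\mathcal W\cap\mathcal B\ne\emptyset$ if and only if $\mathcal W_{nondeg}\cap\mathcal B\neq\emptyset$.
   Context: A reaction network $G$ has species $X_1,\dots,X_s$ and $m$ reactions $\sum_{i}\alpha_{ij}X_i\to\sum_i\beta_{ij}X_i$, $\alpha_{ij},\beta_{ij}\in\mathbb Z_{\ge0}$, $(\alpha_{1j},\dots,\alpha_{sj})\neq(\beta_{1j},\dots,\beta_{sj})$. $\mathcal N$ has entries $\beta_{ij}-\alpha_{ij}$, $S=\mathrm{im}\,\mathcal N$. For $\kappa\in\mathbb R^m_{>0}$, $f(\kappa;x)=\mathcal N(\kappa_1\prod_i x_i^{\alpha_{i1}},\dots,\kappa_m\prod_i x_i^{\alpha_{im}})^\top$. Since $S$ is one-dimensional, species are labelled so that $\beta_{11}-\alpha_{11}\ne0$; for $c\in\mathbb R^{s-1}$, $\mathcal P_c=\{x\in\mathbb R^s_{\ge0}:(\beta_{i1}-\alpha_{i1})x_1-(\beta_{11}-\alpha_{11})x_i=c_{i-1},\ i=2,\dots,s\}$. A steady state is $x\ge0$ with $f(\kappa;x)=0$; positive if $x>0$; nondegenerate if $\mathrm{Jac}_f(x)(S)=S$. $cap_{pos}(G)$ is the maximal $N\in\mathbb Z_{\ge0}\cup\{+\infty\}$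 such that for some $\kappa,c$, $G$ has $N$ positive steady states in $\mathcal P_c$. Notation for $c^*$: $A_1=1,B_1=0$, $A_i=\frac{\beta_{i1}-\alpha_{i1}}{\beta_{11}-\alpha_{11}}$, $B_i=-\frac{c^*_{i-1}}{\beta_{11}-\alpha_{11}}$ ($i\ge2$). $[i]=\{k:A_k\ne0,B_k/A_k=B_i/A_i\}$ if $A_i\ne0$, $[i]=\{k:A_k=0\}$ otherwise; species labelled so that $1,\dots,r$ represent the $r$ distinct classes. $\varphi_k=\min_j\sum_{i\in[k]}\alpha_{ij}$, $\gamma_{kj}=\sum_{i\in[k]}\alpha_{ij}-\varphi_k$. $\mathcal J=\{i:A_i\ne0\}$, $\mathcal H=\{k\in\{1,\dots,r\}\cap\mathcal J:\gamma_{k1},\dots,\gamma_{km}\text{ not all equal}\}$. Standing assumption: if for some rate constants $G$ has $N$ positive steady states in $\mathcal P_{c^*}$ with $0<N<\infty$, species are labelled so that $1\in\mathcal H$. $I_i=(-B_i/A_i,+\infty)$ if $A_i>0$, $(0,+\infty)$ if $A_i=0$, $(0,-B_i/A_i)$ if $A_i<0$; $I=\bigcap_{k\in\mathcal H}I_k$; $\tau\in\mathcal H$ has $A_\tau>0$ with $-B_\tau/A_\tau$ the left endpoint of $I$; $\mathcal L=\{j:\gamma_{\tau j}=0\}$. $\mathcal W=\{(\kappa^*,c^* ):\text{for }\kappa^*,\ G\text{ has }cap_{pos}(G)\text{ positive steady states in }\mathcal P_{c^*}\}$; $\mathcal B=\{(\kappa^*,c^* ):\sum_{j\in\mathcal L}(\beta_{1j}-\alpha_{1j})\kappa^*_j\prod_{i\in\mathcal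 J}|A_i|^{\alpha_{ij}}\prod_{i\notin\mathcal J}B_i^{\alpha_{ij}}\prod_{k\in\mathcal H,k\ne\tau}(\frac{B_k}{|A_k|}-\frac{A_k}{|A_k|}\frac{B_\tau}{A_\tau})^{\gamma_{kj}}>0\}$, all quantities computed from $c^*$. *)

(* Defs.v *)
From HB Require Import structures.
From mathcomp Require Import all_boot all_order all_algebra all_fingroup.
From mathcomp Require Import reals.
Set Implicit Arguments. Unset Strict Implicit. Unset Printing Implicit Defensive.
Import Order.TTheory GRing.Theory Num.Theory.
Local Open Scope ring_scope.

(* Species are indexed by 'I_n.+1 (species X_1 is ord0), reactions by 'I_m.+1 (reaction 1 is ord0; m >= 1 is forced by rank N = 1).
   alpha i j, beta i j are the stoichiometric coefficients of reactant/product. *)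
Section Network.
Variable R : realType.
Variables (n m : nat).
Variables (alpha beta : 'I_n.+1 -> 'I_m.+1 -> nat).

Definition valid_network : Prop := forall j : 'I_m.+1, exists i, alpha i j <> beta i j.

Definition stoich : 'M[R]_(n.+1, m.+1) :=
  \matrix_(i, j) ((beta i j)%:R - (alpha i j)%:R).

Definition one_dim : Prop := \rank stoich = 1%N.

Definition pos_rates (kappa : 'I_m.+1 -> R) : Prop := forall j, 0 < kappa j.

Definition rate (kappa : 'I_m.+1 -> R) (x : 'cV[R]_n.+1) : 'cV[R]_m.+1 :=
  \col_j (kappa j * \prod_i (x i ord0) ^+ alpha i j).
Definition fmap (kappa : 'I_m.+1 -> R) (x : 'cV[R]_n.+1) : 'cV[R]_n.+1 :=
  stoich *m rate kappa x.

(* P_c, with c_{i-1} written c i for the species lift ord0 i (i.e. X_{i+1}) *)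
Definition in_P (c : 'I_n -> R) (x : 'cV[R]_n.+1) : Prop :=
  (forall i, 0 <= x i ord0) /\
  forall i : 'I_n,
    stoich (lift ord0 i) ord0 * x ord0 ord0 - stoich ord0 ord0 * x (lift ord0 i) ord0 = c i.

Definition pss (kappa : 'I_m.+1 -> R) (c : 'I_n -> R) (x : 'cV[R]_n.+1) : Prop :=
  (forall i, 0 < x i ord0) /\ in_P c x /\ fmap kappa x = 0.

Definition jac (kappa : 'I_m.+1 -> R) (x : 'cV[R]_n.+1) : 'M[R]_n.+1 :=
  \matrix_(i, k) \sum_j stoich i j *
     (kappa j * ((alpha k j)%:R * x k ord0 ^+ (alpha k j).-1 *
        \prod_(i' | i' != k) x i' ord0 ^+ alpha i' j)).

(* nondegenerate: Jac_f(x)(S) = S, S = column space of N *)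
Definition nondeg (kappa : 'I_m.+1 -> R) (x : 'cV[R]_n.+1) : Prop :=
  (((jac kappa x *m stoich)^T) == stoich^T)%MS.

Definition exactly (kappa : 'I_m.+1 -> R) (c : 'I_n -> R) (N : nat) : Prop :=
  exists l : seq 'cV[R]_n.+1,
    uniq l /\ size l = N /\ forall x, x \in l <-> pss kappa c x.

Definition cap_pos_eq (C : nat) : Prop :=
  (exists kappa c, pos_rates kappa /\ exactly kappa c C) /\
  (forall kappa c, pos_rates kappa -> exists N, exactly kappa c N /\ (N <= C)%N).

Definition inW (C : nat) (kappa : 'I_m.+1 -> R) (c : 'I_n -> R) : Prop :=
  pos_rates kappa /\ exactly kappa c C.

Definition inWnondeg (C : nat) (kappa : 'I_m.+1 -> R) (c : 'I_n -> R) : Prop :=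
  inW C kappa c /\ forall x, pss kappa c x -> nondeg kappa x.

(* A labelling is a permutation sigma of the species (new
   species number i is old species sigma i) together with r.  The compatibility
   class is parametrised by c in the base labelling; basept c is the point of
   the affine line {x : N_{i1} x_1 - N_11 x_i = c_{i-1}} with x_1 = 0, from
   which the relabelled A_i, B_i are computed (x_i = A_i x_1 + B_i). *)
Section Labelling.
Variable c : 'I_n -> R.
Variable sigma : {perm 'I_n.+1}.
Variable r : nat.

Definition basept (i : 'I_n.+1) : R :=
  match unlift ord0 i with
  | Some i' => - c i' / stoich ord0 ord0
  | None => 0
  end.

Definition Acoef (i : 'I_n.+1) : R := stoich (sigma i) ord0 / stoich (sigma ord0) ord0.
Definition Bcoef (i : 'I_n.+1) : R := basept (sigma i) - Acoef i * basept (sigma ord0).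

Definition in_class (i k : 'I_n.+1) : bool :=
  if Acoef i != 0 then (Acoef k != 0) && (Bcoef k / Acoef k == Bcoef i / Acoef i)
  else Acoef k == 0.

Definition classsum (k : 'I_n.+1) (j : 'I_m.+1) : nat :=
  (\sum_(i | in_class k i) alpha (sigma i) j)%N.

Definition gam (k : 'I_n.+1) (j : 'I_m.+1) : nat :=
  (classsum k j - \big[minn/classsum k j]_(j' : 'I_m.+1) classsum k j')%N.

Definition inJ (i : 'I_n.+1) : bool := Acoef i != 0.

Definition inH (k : 'I_n.+1) : bool :=
  [&& (k < r)%N, Acoef k != 0 & [exists j1, exists j2, gam k j1 != gam k j2]].

(* tau in H, A_tau > 0 and -B_tau/A_tau is the left endpoint of
   I = \bigcap_{k in H} I_k (the max of the left endpoints of the I_k) *)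
Definition is_tau (t : 'I_n.+1) : bool :=
  [&& inH t, 0 < Acoef t &
   [forall k, inH k ==>
      (if 0 < Acoef k then - Bcoef k / Acoef k <= - Bcoef t / Acoef t
       else 0 <= - Bcoef t / Acoef t)]].

Definition Bexpr (kappa : 'I_m.+1 -> R) (t : 'I_n.+1) : R :=
  \sum_(j | gam t j == 0%N)
     stoich (sigma ord0) j * kappa j
     * (\prod_(i | inJ i) `|Acoef i| ^+ alpha (sigma i) j)
     * (\prod_(i | ~~ inJ i) Bcoef i ^+ alpha (sigma i) j)
     * (\prod_(k | inH k && (k != t))
          (Bcoef k / `|Acoef k| - Acoef k / `|Acoef k| * (Bcoef t / Acoef t))
            ^+ gam k j).

Definition inB_lab (kappa : 'I_m.+1 -> R) : Prop :=
  exists t, is_tau t /\ 0 < Bexpr kappa t.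

(* labelling conventions of the paper for the class P_c:
   beta_11 - alpha_11 <> 0; species 1..r represent the r distinct classes;
   standing assumption: if some rate constants give N positive steady states
   in P_c with 0 < N < oo, then 1 \in H. *)
Definition admissible_lab : Prop :=
  [/\ stoich (sigma ord0) ord0 != 0,
      (forall k1 k2 : 'I_n.+1, (k1 < r)%N -> (k2 < r)%N -> in_class k1 k2 -> k1 = k2),
      (forall i : 'I_n.+1, exists k : 'I_n.+1, (k < r)%N /\ in_class k i) &
      ((exists kappa N, pos_rates kappa /\ (0 < N)%N /\ exactly kappa c N) ->
         inH ord0)].

End Labelling.

Definition inB (lab : ('I_n -> R) -> {perm 'I_n.+1} * nat)
    (kappa : 'I_m.+1 -> R) (c : 'I_n -> R) : Prop :=
  inB_lab c (lab c).1 (lab c).2 kappa.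

End Network.

(* Main.v *)
Require Import Defs.
From HB Require Import structures.
From mathcomp Require Import all_boot all_order all_algebra all_fingroup.
From mathcomp Require Import reals.
From mathcomp Require Import boolp ring lra zify.
Local Open Scope ring_scope.

Module P1.
Set Implicit Arguments. Unset Strict Implicit. Unset Printing Implicit Defensive.
Import Order.TTheory GRing.Theory Num.Theory.
Local Open Scope ring_scope.

Section ProdDeriv.
Variable R : realType.

Lemma deriv_prod_seq (I : eqType) (s : seq I) (F : I -> {poly R}) :
  uniq s ->
  (\prod_(i <- s) F i)^`() = \sum_(l <- s) (F l)^`() * \prod_(i <- s | i != l) F i.
Proof.
elim: s => [|a s IH] /=; first by rewrite !big_nil derivC.
case/andP => has us.
rewrite !big_cons derivM IH // eqxx.
have -> : \prod_(i <- s | i != a) F i = \prod_(i <- s) F i.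
  rewrite -big_filter; congr bigop; apply/all_filterP.
  by apply/allP => x xs; apply: contraNneq has => <-.
congr (_ + _); rewrite mulr_sumr; apply: eq_big_seq => l ls.
rewrite big_cons ifT; last by apply: contraNneq has => ->.
by rewrite mulrCA.
Qed.

Lemma deriv_prod (I : finType) (F : I -> {poly R}) :
  (\prod_i F i)^`() = \sum_l (F l)^`() * \prod_(i | i != l) F i.
Proof. exact: deriv_prod_seq (index_enum_uniq I). Qed.
End ProdDeriv.

End P1.
Import P1.

Module P2.
Set Implicit Arguments. Unset Strict Implicit. Unset Printing Implicit Defensive.
Import Order.TTheory GRing.Theory Num.Theory.
Local Open Scope ring_scope.

Section Alg.
Variable R : realType.
Variables (n m : nat) (alpha beta : 'I_n.+1 -> 'I_m.+1 -> nat).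
Local Notation N := (stoich R alpha beta).
Local Notation fmap := (fmap alpha beta).
Local Notation jac := (jac alpha beta).
Local Notation nondeg := (nondeg alpha beta).
Hypothesis hN0 : N ord0 ord0 != 0.
Hypothesis hrk : \rank N = 1%N.

Definition acoef (i : 'I_n.+1) : R := N i ord0 / N ord0 ord0.

Lemma acoef0 : acoef ord0 = 1.
Proof. by rewrite /acoef divff. Qed.

Lemma rank1 i j : N i j = acoef i * N ord0 j.
Proof.
have r0 : row ord0 N != 0.
  apply: contra hN0 => /eqP/matrixP/(_ ord0 ord0); rewrite !mxE => ->. by [].
have e : (row ord0 N == N)%MS.
  by rewrite -(mxrank_leqif_eq (row_sub _ _)).2 rank_rV r0 hrk.
move/andP: e => [_ e2].
have /sub_rVP [k hk] := submx_trans (row_sub i N) e2.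
have hk' j' : N i j' = k * N ord0 j'.
  by move/matrixP: hk => /(_ ord0 j'); rewrite !mxE.
rewrite hk' /acoef (hk' ord0) mulfK //.
Qed.

Definition gfun (kappa : 'I_m.+1 -> R) (x : 'cV[R]_n.+1) : R :=
  \sum_j N ord0 j * (kappa j * \prod_i (x i ord0) ^+ alpha i j).

Lemma fmapE kappa x i : fmap kappa x i ord0 = acoef i * gfun kappa x.
Proof.
rewrite /Defs.fmap /gfun mxE mulr_sumr; apply: eq_bigr => j _.
by rewrite (rank1 i j) /Defs.rate mxE [RHS]mulrA.
Qed.

Lemma fmap0P kappa x : fmap kappa x = 0 <-> gfun kappa x = 0.
Proof.
split.
  by move/matrixP/(_ ord0 ord0); rewrite fmapE acoef0 mul1r mxE.
move=> h; apply/matrixP => i j; rewrite (ord1 j) fmapE h mulr0 mxE //.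
Qed.

Definition Dfun (kappa : 'I_m.+1 -> R) (x : 'cV[R]_n.+1) : R :=
  \sum_l acoef l * \sum_j N ord0 j *
     (kappa j * ((alpha l j)%:R * x l ord0 ^+ (alpha l j).-1 *
        \prod_(i' | i' != l) x i' ord0 ^+ alpha i' j)).

Lemma jacN kappa x : jac kappa x *m N = Dfun kappa x *: N.
Proof.
apply/matrixP => i k; rewrite [LHS]mxE [RHS]mxE (rank1 i k) /Dfun mulr_suml.
apply: eq_bigr => l _.
rewrite (rank1 l k) /Defs.jac mxE mulr_suml mulr_sumr mulr_suml.
apply: eq_bigr => j _; rewrite (rank1 i j).
set T := kappa j * _. ring.
Qed.

Lemma nondeg_of kappa x : Dfun kappa x != 0 -> nondeg kappa x.
Proof.
move=> hD; rewrite /nondeg jacN linearZ /=.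
by apply/eqmxP; apply: eqmx_scale.
Qed.

End Alg.

End P2.
Import P2.

Module P3.
Set Implicit Arguments. Unset Strict Implicit. Unset Printing Implicit Defensive.
Import Order.TTheory GRing.Theory Num.Theory.
Local Open Scope ring_scope.

Section Poly.
Variable R : realType.
Variables (n m : nat) (alpha beta : 'I_n.+1 -> 'I_m.+1 -> nat).
Local Notation N := (stoich R alpha beta).
Local Notation fmap := (fmap alpha beta).
Local Notation pss := (pss alpha beta).
Hypothesis hN0 : N ord0 ord0 != 0.
Hypothesis hrk : \rank N = 1%N.
Variable c : 'I_n -> R.
Local Notation acoef := (acoef R alpha beta).
Local Notation gfun := (gfun alpha beta).
Local Notation Dfun := (Dfun alpha beta).

Definition bpt (i : 'I_n.+1) : R := basept alpha beta c i.
Definition line (t : R) : 'cV[R]_n.+1 := \col_i (acoef i * t + bpt i).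
Definition lp (i : 'I_n.+1) : {poly R} := acoef i *: 'X + (bpt i)%:P.
Definition pj (j : 'I_m.+1) : {poly R} := \prod_i lp i ^+ alpha i j.
Definition Pk (kappa : 'I_m.+1 -> R) : {poly R} := \sum_j (N ord0 j * kappa j) *: pj j.

Lemma lp_horner i t : (lp i).[t] = line t i ord0.
Proof. by rewrite /lp hornerD hornerZ hornerX hornerC mxE. Qed.

Lemma Pk_horner kappa t : (Pk kappa).[t] = gfun kappa (line t).
Proof.
rewrite /Pk horner_sum /P2.gfun; apply: eq_bigr => j _.
rewrite hornerZ /pj horner_prod -mulrA; congr (_ * (_ * _)).
by apply: eq_bigr => i _; rewrite horner_exp lp_horner.
Qed.

Lemma lp_deriv i : (lp i)^`() = (acoef i)%:P.
Proof. by rewrite /lp derivD derivZ derivX derivC addr0 alg_polyC. Qed.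

Lemma Pk_deriv kappa t : (Pk kappa)^`().[t] = Dfun kappa (line t).
Proof.
rewrite /Pk (big_morph _ (@derivD R) (deriv0 R)) horner_sum /P2.Dfun.
under [RHS]eq_bigr do rewrite mulr_sumr.
rewrite exchange_big; apply: eq_bigr => j _.
rewrite derivZ hornerZ /pj deriv_prod horner_sum mulr_sumr; apply: eq_bigr => l _.
rewrite deriv_exp lp_deriv hornerM hornerMn hornerM hornerC horner_exp lp_horner horner_prod.
under eq_bigr do rewrite horner_exp lp_horner.
rewrite -mulr_natr. set P := \prod_(_ | _) _. ring.
Qed.

Lemma bpt0 : bpt ord0 = 0.
Proof. by rewrite /bpt /basept unlift_none. Qed.

Lemma bpt_lift i : bpt (lift ord0 i) = - c i / N ord0 ord0.
Proof. by rewrite /bpt /basept liftK. Qed.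

Lemma line00 t : line t ord0 ord0 = t.
Proof. by rewrite mxE (acoef0 hN0) bpt0 mul1r addr0. Qed.

Definition posl (t : R) := forall i, 0 < line t i ord0.

Lemma pssP kappa x :
  pss kappa c x <-> (x = line (x ord0 ord0) /\ posl (x ord0 ord0) /\ root (Pk kappa) (x ord0 ord0)).
Proof.
have xl : in_P alpha beta c x -> x = line (x ord0 ord0).
  move=> [_ h]; apply/matrixP => i j; rewrite (ord1 j) mxE.
  case: (unliftP ord0 i) => [i'|] ->; last by rewrite (acoef0 hN0) bpt0 mul1r addr0.
  have := h i'; rewrite bpt_lift /P2.acoef => <-.
  by field.
split.
  move=> [hp [hP hf]]; have e := xl hP.
  split => //; split; first by move=> i; rewrite -e.
  by rewrite /root Pk_horner -e; apply/eqP; apply/(fmap0P hN0 hrk).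
move=> [e [hp hr]]; split; first by move=> i; rewrite e; apply: hp.
split; last first.
  by apply/(fmap0P hN0 hrk); rewrite e -Pk_horner; apply/eqP.
split; first by move=> i; apply: ltW; rewrite e; apply: hp.
move=> i; rewrite e line00 [line _ (lift _ _) _]mxE bpt_lift /P2.acoef. by field.
Qed.

End Poly.

End P3.
Import P3.

Module P4.
Set Implicit Arguments. Unset Strict Implicit. Unset Printing Implicit Defensive.
Import Order.TTheory GRing.Theory Num.Theory.
Local Open Scope ring_scope.

Section Gen.
Variable R : realType.

Lemma fin_min (I : eqType) (s : seq I) (Q : I -> R -> Prop) :
  (forall i e e', Q i e -> 0 < e' -> e' <= e -> Q i e') ->
  (forall i, i \in s -> exists2 e, 0 < e & Q i e) ->
  exists2 e, 0 < e & forall i, i \in s -> Q i e.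
Proof.
move=> dc; elim: s => [|a s IH] h; first by exists 1.
have [e1 e1p h1] := h a (mem_head _ _).
have [e2 e2p h2] : exists2 e, 0 < e & forall i, i \in s -> Q i e.
  by apply: IH => i hi; apply: h; rewrite in_cons hi orbT.
exists (Num.min e1 e2); first by rewrite lt_min e1p e2p.
move=> i; rewrite in_cons => /orP [/eqP -> | hi].
  by apply: dc h1 _ _; rewrite ?lt_min ?e1p ?e2p // ge_min lexx.
by apply: dc (h2 _ hi) _ _; rewrite ?lt_min ?e1p ?e2p // ge_min lexx orbT.
Qed.

Lemma ivt_open (p : {poly R}) a b : a < b -> p.[a] * p.[b] < 0 ->
  exists x, a < x < b /\ root p x.
Proof.
move=> ab hab.
suff gen : forall q : {poly R}, q.[a] < 0 -> 0 < q.[b] -> exists x, a < x < b /\ root q x.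
  have [ha|ha] := ltP p.[a] 0.
    by apply: gen => //; nra.
  have [x [hx hr]] : exists x, a < x < b /\ root (- p) x.
    have pa : 0 < p.[a].
      rewrite lt_neqAle ha andbT eq_sym; apply: contraTneq hab => ->.
      by rewrite mul0r ltxx.
    have pb : p.[b] < 0 by rewrite -(pmulr_rlt0 _ pa).
    by apply: gen; rewrite !hornerN ?oppr_lt0 ?oppr_gt0.
  by exists x; split => //; move: hr; rewrite /root hornerN oppr_eq0.
move=> q qa qb.
have [x /andP [h1 h2] hr] : exists2 x, a <= x <= b & root q x.
  by apply: poly_ivt (ltW ab) _; rewrite (ltW qa) ltW.
exists x; split => //; apply/andP; split.
  rewrite lt_neqAle h1 andbT; apply: contraTneq hr => <-.
  by rewrite /root lt_eqF.
rewrite lt_neqAle h2 andbT; apply: contraTneq hr => ->.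
by rewrite /root gt_eqF.
Qed.


End Gen.

End P4.
Import P4.

Module P5.
Set Implicit Arguments. Unset Strict Implicit. Unset Printing Implicit Defensive.
Import Order.TTheory GRing.Theory Num.Theory.
Local Open Scope ring_scope.

Lemma dXsub (R : realType) (a : R) k : (('X - a%:P) ^+ k.+1)^`() = ('X - a%:P) ^+ k *+ k.+1.
Proof. rewrite deriv_exp derivXsubC mul1r. reflexivity. Qed.
Lemma Wid (R : comRingType) (q p Y dq dp Z K : R) :
  (q * (Y * Z)) * dp - ((dq * (Y * Z) + q * (Z * K)) * p) = Z * (q * Y * dp - dq * Y * p - q * p * K).
Proof. ring. Qed.

Lemma derivPu (R : realType) (P p : {poly R}) u t : (P + u *: p)^`().[t] = P^`().[t] + u * p^`().[t].
Proof. by rewrite derivD derivZ hornerD hornerZ. Qed.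
Lemma hornerPu (R : realType) (P p : {poly R}) u t : (P + u *: p).[t] = P.[t] + u * p.[t].
Proof. by rewrite hornerD hornerZ. Qed.

Section Main.
Variable R : realType.
Variables (n m : nat) (alpha beta : 'I_n.+1 -> 'I_m.+1 -> nat).
Local Notation N := (stoich R alpha beta).
Local Notation pss := (pss alpha beta).
Local Notation exactly := (exactly alpha beta).
Hypothesis hN0 : N ord0 ord0 != 0.
Hypothesis hrk : \rank N = 1%N.
Variable c : 'I_n -> R.
Local Notation acoef := (acoef R alpha beta).
Local Notation Pk := (Pk alpha beta c).
Local Notation pj := (pj alpha beta c).
Local Notation line := (line alpha beta c).
Local Notation posl := (posl alpha beta c).

Variables (kappa : 'I_m.+1 -> R) (C : nat) (l : seq 'cV[R]_n.+1).
Hypothesis hl_uniq : uniq l.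
Hypothesis hl_size : size l = C.
Hypothesis hl : forall x, x \in l <-> pss kappa c x.

Definition ks (s : R) : 'I_m.+1 -> R := fun j => kappa j + (if j == ord0 then s else 0).
Definition P0 := Pk kappa.
Definition p0 := pj ord0.
Definition Pu (u : R) := P0 + u *: p0.

Lemma Pk_ks s : Pk (ks s) = Pu (N ord0 ord0 * s).
Proof.
rewrite /P3.Pk /Pu /P0 /P3.Pk /ks.
under eq_bigr do rewrite mulrDr scalerDl.
rewrite big_split /=; congr (_ + _).
rewrite (bigD1 ord0) //= big1 ?addr0 // => j /negbTE ->.
by rewrite mulr0 scale0r.
Qed.

Definition T := [seq (x : 'cV[R]_n.+1) ord0 ord0 | x <- l].

Lemma memT t : t \in T <-> posl t /\ root P0 t.
Proof.
split.
  case/mapP => x /hl /(pssP hN0 hrk) [e [hp hr]] ->; by split.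
move=> [hp hr]; apply/mapP; exists (line t); last by rewrite (line00 hN0).
apply/hl/(pssP hN0 hrk); rewrite (line00 hN0); by split.
Qed.

Lemma T_uniq : uniq T.
Proof.
rewrite map_inj_in_uniq // => x y /hl /(pssP hN0 hrk) [ex _] /hl /(pssP hN0 hrk) [ey _] e.
by rewrite ex ey e.
Qed.

Lemma size_T : size T = C.
Proof. by rewrite size_map. Qed.

Lemma p0_pos t : posl t -> 0 < p0.[t].
Proof.
move=> hp; rewrite /p0 /P3.pj horner_prod; apply: prodr_gt0 => i _.
by rewrite horner_exp lp_horner; apply: exprn_gt0.
Qed.

Lemma posl_open t : posl t -> exists2 e, 0 < e & forall u, `|u - t| <= e -> posl u.
Proof.
move=> hp.
have [e e0 he] : exists2 e, 0 < e & forall i, i \in enum 'I_n.+1 ->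
    forall u, `|u - t| <= e -> 0 < line u i ord0.
  apply: fin_min => [i e1 e2 h _ h2 u hu|i _]; first exact: h u (le_trans hu h2).
  have hi := hp i; rewrite mxE in hi.
  set L := acoef i * t + bpt alpha beta c i in hi.
  exists (L / (`|acoef i| + 1)); first by apply: divr_gt0 => //; rewrite ltr_wpDl.
  move=> u hu; rewrite mxE.
  have h1 : `|acoef i * (u - t)| <= `|acoef i| * (L / (`|acoef i| + 1)).
    by rewrite normrM; apply: ler_wpM2l.
  have h2 : - `|acoef i * (u - t)| <= acoef i * (u - t).
    by rewrite lerNl -normrN ler_norm.
  have h3 : (`|acoef i| + 1) * (L / (`|acoef i| + 1)) = L.
    by rewrite mulrC divfK // gt_eqF // ltr_wpDl.
  have h4 : 0 < L / (`|acoef i| + 1) by apply: divr_gt0 => //; rewrite ltr_wpDl.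
  rewrite /L in h3; move: h1 h2 h3 h4; set E := (_ / _); set Q := `|_|; move=> h1 h2 h3 h4; nra.
exists e => // u hu i; exact: he (mem_enum _ i) u hu.
Qed.

Lemma posl_conv t1 t2 u : posl t1 -> posl t2 -> t1 <= u <= t2 -> posl u.
Proof.
move=> h1 h2 /andP [a b] i; move: (h1 i) (h2 i); rewrite !mxE => p1 p2.
have [ha|ha] := leP 0 (acoef i); nra.
Qed.

Hypothesis hC : (0 < C)%N.

Lemma exists_e : exists2 e, 0 < e & forall t, t \in T ->
  (forall t', t' \in T -> t' != t -> 3 * e < `|t - t'|) /\
  (forall u, `|u - t| <= e -> posl u).
Proof.
apply: fin_min => [t e1 e2 [h1 h2] e2p le21|t ht].
  split; last by move=> u hu; apply: h2; exact: le_trans hu le21.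
  move=> t' ht' ne; apply: (le_lt_trans _ (h1 t' ht' ne)); by apply: ler_wpM2l.
have [e1 e1p h1] : exists2 e, 0 < e & forall t', t' \in T -> t' != t -> 3 * e < `|t - t'|.
  apply: fin_min => [t' a b h _ hab ne|t' _].
    by apply: (le_lt_trans _ (h ne)); apply: ler_wpM2l.
  have [->|ne] := eqVneq t' t; first by exists 1 => //; rewrite eqxx.
  have dp : 0 < `|t - t'| by rewrite normr_gt0 subr_eq0 eq_sym.
  exists (`|t - t'| / 4); first by apply: divr_gt0.
  move=> _; lra.
have [e2 e2p h2] := posl_open (proj1 (memT t) ht).1.
exists (Num.min e1 e2); first by rewrite lt_min e1p e2p.
split.
  move=> t' ht' ne; apply: (le_lt_trans _ (h1 t' ht' ne)); apply: ler_wpM2l => //.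
  by rewrite ge_min lexx.
by move=> u hu; apply: h2; apply: le_trans hu _; rewrite ge_min lexx orbT.
Qed.

Lemma t0_mem : nth 0 T 0 \in T.
Proof. by apply: mem_nth; rewrite size_T. Qed.

Lemma P0_neq0 : P0 != 0.
Proof.
set t0 := nth 0 T 0.
have ht0 := t0_mem.
have [e e0 he] := exists_e.
apply/negP => /eqP Pz.
set g := fun k : nat => t0 + e / (k.+1)%:R.
have : (size [seq g k | k <- iota 0 C.+1] <= size T)%N.
  apply: uniq_leq_size.
    rewrite map_inj_in_uniq ?iota_uniq // => a b _ _ /= /addrI.
    move/(mulfI (lt0r_neq0 e0))/invr_inj/eqP; rewrite eqr_nat eqSS.
    by move/eqP.
  move=> x /mapP [k _ ->]; apply/memT; split; last by rewrite /root Pz horner0.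
  apply: (he t0 ht0).2; rewrite /g addrAC subrr add0r ger0_norm ?divr_ge0 ?(ltW e0) ?ler0n //.
  by rewrite ler_pdivrMr ?ltr0Sn // ler_peMr ?(ltW e0) // ler1n.
by rewrite size_map size_iota size_T ltnn.
Qed.

Definition Wp := P0 * p0^`() - P0^`() * p0.

Lemma W_neq0 : Wp != 0.
Proof.
set t0 := nth 0 T 0.
have [hp hr] := proj1 (memT t0) t0_mem.
have p0p := p0_pos hp.
case: (multiplicity_XsubC P0 t0) => k [q hq eP].
rewrite P0_neq0 /= in hq.
case: k eP => [|k] eP.
  by rewrite expr0 mulr1 in eP; move: hr; rewrite eP (negbTE hq).
have hY0 : ('X - t0%:P).[t0] = 0 by rewrite hornerXsubC subrr.
have hYn : ('X - t0%:P) != 0 by rewrite polyXsubC_eq0.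
move: ('X - t0%:P) (dXsub t0 k) hY0 hYn eP => Y dY hY0 hYn eP.
have eW : Wp = Y ^+ k * (q * Y * p0^`() - q^`() * Y * p0 - q * p0 * (k.+1)%:R).
  rewrite /Wp eP derivM dY exprS -mulr_natr.
  exact: Wid.
apply/negP => /eqP W0; move: W0; rewrite eW => /eqP.
rewrite mulf_eq0 expf_eq0 (negbTE hYn) andbF /= => /eqP B0.
have := congr1 (horner^~ t0) B0.
rewrite !hornerD !hornerN !hornerM hY0 !mulr0 mul0r horner0 mul0r !sub0r.
rewrite hornerMn hornerC oppr0 sub0r => /eqP; rewrite oppr_eq0.
rewrite !mulf_eq0 -/(root q t0) (negbTE hq) /= pnatr_eq0 /= orbF => /eqP p00.
by move: p0p; rewrite p00 ltxx.
Qed.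

Definition bad (u : R) := exists t, posl t /\ root (Pu u) t /\ root (Pu u)^`() t.

Lemma few_bad (f : nat -> R) : injective f -> exists k, ~ bad (f k).
Proof.
move=> finj; apply: contrapT => H.
have hb k : bad (f k).
  by apply: contrapT => nb; apply: H; exists k.
have [g hg] := choice hb.
have rootW k : root Wp (g k) /\ f k = - P0.[g k] / p0.[g k].
  have [hp [h1 h2]] := hg k.
  move: h1 h2; rewrite /root /Pu hornerPu derivPu => /eqP h1 /eqP h2.
  have pp := p0_pos hp.
  have e1 : P0.[g k] = - (f k * p0.[g k]) by lra.
  have e2 : (P0^`()).[g k] = - (f k * (p0^`()).[g k]) by lra.
  split; last by rewrite e1; field; rewrite lt0r_neq0.
  by rewrite /root /Wp hornerD hornerN !hornerM e1 e2; apply/eqP; ring.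
have : (size [seq g k | k <- iota 0 (size Wp)] < size Wp)%N.
  apply: max_poly_roots W_neq0 _ _.
    by apply/allP => x /mapP [k _ ->]; exact: (rootW k).1.
  rewrite map_inj_in_uniq ?iota_uniq // => a b _ _ e; apply: finj.
  by rewrite (rootW a).2 (rootW b).2 e.
by rewrite size_map size_iota ltnn.
Qed.

Hypothesis hcap : forall k', pos_rates k' -> exists N', exactly k' c N' /\ (N' <= C)%N.
Variable Ok : R -> Prop.
Hypothesis hOk : exists2 eps, 0 < eps & forall s, `|s| < eps -> Ok s.
Hypothesis hOkpos : forall s, Ok s -> pos_rates (ks s).

Lemma main_pert : exists s, Ok s /\ exactly (ks s) c C /\
  (forall x, pss (ks s) c x -> nondeg alpha beta (ks s) x).
Proof.
have [e e0 he] := exists_e.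
pose zpt := fun d : R * bool => if d.2 then d.1 - e else d.1 + e.
pose D := [seq (t, b) | t <- T, b <- [:: true; false]].
have memD d : d \in D -> d.1 \in T.
  by case/allpairsP => [[t b] [ht _ ->]].
have zpos d : d \in D -> posl (zpt d).
  move=> /memD ht; apply: (he _ ht).2; rewrite ler_distl /zpt.
  by case: d.2; apply/andP; split; lra.
have znz d : d \in D -> P0.[zpt d] != 0.
  move=> hd; apply/negP => hz.
  have hzT : zpt d \in T by apply/memT; split; [exact: zpos|exact: hz].
  have ne : zpt d != d.1 by rewrite /zpt; case: d.2; apply/negP => /eqP; lra.
  have := (he _ (memD _ hd)).1 _ hzT ne.
  by rewrite /zpt; case: d.2; rewrite ltr_normr => /orP []; lra.
have [sg hsg hcnt] : exists2 sg : R, (sg == 1) || (sg == -1) &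
    (C <= count (fun d => (P0.[zpt d] * sg < 0)%R) D)%N.
  have hsum : (count (fun d => (P0.[zpt d] * 1 < 0)%R) D +
               count (fun d => (P0.[zpt d] * -1 < 0)%R) D = C * 2)%N.
    have -> : count (fun d => (P0.[zpt d] * -1 < 0)%R) D =
              count (predC (fun d => (P0.[zpt d] * 1 < 0)%R)) D.
      apply: eq_in_count => d hd /=.
      by rewrite mulr1 mulrN1 oppr_lt0 lt_def (znz d hd) -leNgt.
    by rewrite count_predC size_allpairs size_T.
  case: (leqP C (count (fun d => (P0.[zpt d] * 1 < 0)%R) D)) => h.
    by exists 1 => //; rewrite eqxx.
  exists (-1); first by rewrite eqxx orbT.
  move: hsum h; set a := count _ _; set b := count _ _; lia.
have sgn : `|sg| = 1 by case/orP: hsg => /eqP ->; rewrite ?normrN normr1.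
have sg0 : sg != 0 by rewrite -normr_eq0 sgn oner_eq0.
have [η1 η1p hη1] : exists2 η, 0 < η & forall d, d \in D ->
    (d \in D -> η * p0.[zpt d] < `|P0.[zpt d]|).
  apply: fin_min => [d a b h bp ba hd|d hd].
    apply: le_lt_trans (h hd); apply: ler_wpM2r => //; apply: ltW; apply: p0_pos; exact: zpos.
  have pp := p0_pos (zpos d hd).
  have Pp : 0 < `|P0.[zpt d]| by rewrite normr_gt0 znz.
  exists (`|P0.[zpt d]| / (p0.[zpt d] * 2)); first by apply: divr_gt0 => //; lra.
  move=> _.
  have -> : `|P0.[zpt d]| / (p0.[zpt d] * 2) * p0.[zpt d] = `|P0.[zpt d]| / 2.
    by field; rewrite lt0r_neq0.
  lra.
have [eps epsp hok] := hOk.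
have N0p : 0 < `|N ord0 ord0| by rewrite normr_gt0.
pose η0 := Num.min η1 (eps * `|N ord0 ord0|).
have η0p : 0 < η0 by rewrite lt_min η1p mulr_gt0.
pose f := fun k : nat => sg * (η0 / (k.+2)%:R).
have finj : injective f.
  move=> a b /(mulfI sg0) /(mulfI (lt0r_neq0 η0p)) /invr_inj /eqP.
  by rewrite eqr_nat !eqSS => /eqP.
have [k hnb] := few_bad finj.
pose η' := η0 / (k.+2)%:R.
have η'p : 0 < η' by apply: divr_gt0.
have η'lt : η' < η0.
  by rewrite /η' ltr_pdivrMr ?ltr0Sn // ltr_pMr // ltr1n.
pose u := f k.
pose s := u / N ord0 ord0.
have hs : N ord0 ord0 * s = u by rewrite /s mulrC divfK.
have hu : `|u| = η' by rewrite /u /f normrM sgn mul1r gtr0_norm.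
have Oks : Ok s.
  apply: hok; rewrite /s normrM normfV hu ltr_pdivrMr //.
  apply: lt_le_trans η'lt _; by rewrite ge_min lexx orbT.
have hpos := hOkpos Oks.
have [N' [[l' [ul' [sl' hl']]] hN']] := hcap hpos.
have hr : forall d, exists r, d \in D -> P0.[zpt d] * sg < 0 ->
    (if d.2 then d.1 - e < r < d.1 else d.1 < r < d.1 + e) /\ root (Pu u) r.
  move=> [t b].
  have [hd|hd] := boolP ((t, b) \in D); last by exists 0 => H; case/negP: hd.
  have [hc|hc] := boolP (P0.[zpt (t, b)] * sg < 0); last by exists 0 => _ H; case/negP: hc.
  have [hpt hrt] := proj1 (memT t) (memD _ hd).
  have pt := p0_pos hpt.
  have pz := p0_pos (zpos _ hd).
  have hzl : η' * p0.[zpt (t, b)] < `|P0.[zpt (t, b)]|.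
    apply: lt_trans (hη1 _ hd hd); rewrite ltr_pM2r //.
    by apply: lt_le_trans η'lt _; rewrite ge_min lexx.
  have key : (Pu u).[zpt (t, b)] * (Pu u).[t] < 0.
    rewrite !hornerPu (eqP hrt) add0r /u /f -/η'.
    move: hc hzl; set z := zpt (t, b); case/orP: hsg => /eqP -> hc hzl.
      rewrite mulr1 in hc; rewrite ltr0_norm // in hzl.
      have A : P0.[z] + 1 * η' * p0.[z] < 0 by lra.
      have B : 0 < 1 * η' * p0.[t] by rewrite mul1r mulr_gt0.
      by rewrite mulrA; nra.
    rewrite mulrN1 oppr_lt0 in hc; rewrite gtr0_norm // in hzl.
    have A : 0 < P0.[z] + -1 * η' * p0.[z] by lra.
    have B : -1 * η' * p0.[t] < 0 by rewrite mulN1r mulNr oppr_lt0 mulr_gt0.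
    by rewrite mulrA; nra.
  have te1 : t - e < t by lra.
  have te2 : t < t + e by lra.
  rewrite /zpt /= in key; case: b {hd hc hzl pz} key => /= key.
    have [r [hr1 hr2]] := ivt_open te1 key.
    by exists r.
  rewrite mulrC in key.
  have [r [hr1 hr2]] := ivt_open te2 key.
  by exists r.
have [rt hrt] := choice hr.
pose L := [seq line (rt d) | d <- [seq d <- D | (P0.[zpt d] * sg < 0)%R]].
have Lpss x : x \in L -> pss (ks s) c x.
  case/mapP => [[t b]]; rewrite mem_filter => /andP [hc hd] ->.
  have [hb hroot] := hrt _ hd hc.
  apply/(pssP hN0 hrk); rewrite (line00 hN0) Pk_ks hs; split => //; split => //.
  apply: (he _ (memD _ hd)).2; rewrite ler_distl /=; move: hb => /=.
  by case: b {hc hd hroot} => /andP [h1 h2]; apply/andP; split; lra.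
have Luniq : uniq L.
  rewrite map_inj_in_uniq.
    rewrite filter_uniq // allpairs_uniq ?T_uniq //.
    by move=> [? ?] [? ?] _ _ /= [-> ->].
  move=> [t1 b1] [t2 b2]; rewrite !mem_filter => /andP [c1 d1] /andP [c2 d2].
  move/(congr1 (fun x : 'cV[R]_n.+1 => x ord0 ord0)); rewrite !(line00 hN0) => er.
  have [i1 _] := hrt _ d1 c1; have [i2 _] := hrt _ d2 c2.
  rewrite er in i1.
  have ht1 := memD _ d1; have ht2 := memD _ d2.
  have tt : t1 = t2.
    apply/eqP; apply: contraT => ne.
    have := (he _ ht2).1 _ ht1 ne; rewrite ltr_normr.
    by move: i1 i2 => /=; case: b1 {c1 d1 ht1 er}; case: b2 {c2 d2 ht2} => /= /andP [? ?] /andP [? ?] /orP []; lra.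
  subst t2; move: i1 i2 => /=.
  by case: b1 {c1 d1 ht1 er}; case: b2 {c2 d2 ht2} => /andP [? ?] /andP [? ?] //; exfalso; lra.
have sL : size L = count (fun d => (P0.[zpt d] * sg < 0)%R) D.
  by rewrite size_map size_filter.
have Lsub : {subset L <= l'} by move=> x /Lpss /hl'.
have hle := uniq_leq_size Luniq Lsub.
rewrite sL sl' in hle.
have NC : N' = C by apply/eqP; rewrite eqn_leq hN' (leq_trans hcnt hle).
exists s; split => //; split.
  by exists l'; rewrite -NC.
move=> x /(pssP hN0 hrk) [ex [hp hr0]]; rewrite ex.
apply: (nondeg_of hN0 hrk); rewrite -Pk_deriv Pk_ks hs.
apply/negP => /eqP h0; apply: hnb; exists (x ord0 ord0); split => //; split.
  by rewrite Pk_ks hs in hr0.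
by rewrite /root h0.
Qed.


End Main.

End P5.
Import P5.

Module P6.
Import Order.TTheory GRing.Theory Num.Theory.

Local Open Scope ring_scope.

Lemma Bexpr_ks (R : realType) (n m : nat) (alpha beta : 'I_n.+1 -> 'I_m.+1 -> nat)
   c sigma r (kappa : 'I_m.+1 -> R) t s :
  Bexpr alpha beta c sigma r (ks kappa s) t =
  Bexpr alpha beta c sigma r kappa t +
  s * Bexpr alpha beta c sigma r (fun j => if j == ord0 then 1 else 0) t.
Proof.
rewrite /Bexpr mulr_sumr -big_split /=; apply: eq_bigr => j _.
rewrite /ks; case: (j == ord0); ring.
Qed.


End P6.
Import P6.

Unset Implicit Arguments.
Import Order.TTheory GRing.Theory Num.Theory.
Theorem corollary6p5 (R : realType) (n m : nat)
    (alpha beta : 'I_n.+1 -> 'I_m.+1 -> nat) (C : nat)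
    (lab : ('I_n -> R) -> {perm 'I_n.+1} * nat) :
  valid_network alpha beta ->
  one_dim R alpha beta ->
  alpha ord0 ord0 <> beta ord0 ord0 ->
  cap_pos_eq R alpha beta C ->
  (forall c : 'I_n -> R, admissible_lab alpha beta c (lab c).1 (lab c).2) ->
  ((exists (kappa : 'I_m.+1 -> R) (c : 'I_n -> R),
      inW alpha beta C kappa c /\ inB alpha beta lab kappa c) <->
   (exists (kappa : 'I_m.+1 -> R) (c : 'I_n -> R),
      inWnondeg alpha beta C kappa c /\ inB alpha beta lab kappa c)).
Proof.
move=> _ hrk hab [_ hcap] _; split; last first.
  by move=> [kappa [c [[hW _] hB]]]; exists kappa, c.
move=> [kappa [c [[hpos [l [hu [hs hl]]]] [t [ht hB]]]]].
have hN0 : stoich R alpha beta ord0 ord0 != 0.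
  rewrite mxE subr_eq0 eqr_nat; apply/eqP => e; exact: hab (esym e).
case: C hcap hs => [|C] hcap hs.
  exists kappa, c; split; last by exists t.
  split; first by split => //; exists l.
  move=> x /hl; case: l hu hs hl => // _ _ _; by rewrite in_nil.
set K := Bexpr alpha beta c (lab c).1 (lab c).2 (fun j => if j == ord0 then 1 else 0) t.
set B0 := Bexpr alpha beta c (lab c).1 (lab c).2 kappa t in hB.
pose Ok := fun s : R => 0 < kappa ord0 + s /\
  0 < Bexpr alpha beta c (lab c).1 (lab c).2 (ks kappa s) t.
have k0 := hpos ord0.
have hOk : exists2 eps, 0 < eps & forall s, `|s| < eps -> Ok s.
  exists (Num.min (kappa ord0) (B0 / (`|K| + 1))).
    by rewrite lt_min k0 divr_gt0 // ltr_wpDl.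
  move=> s; rewrite lt_min => /andP [h1 h2]; split.
    by move: h1; rewrite ltr_norml => /andP [? ?]; lra.
  rewrite Bexpr_ks -/B0 -/K.
  have e1 : `|s * K| <= `|s| * `|K| by rewrite normrM.
  have e2 : - `|s * K| <= s * K by rewrite lerNl -normrN ler_norm.
  have e3 : `|s| * (`|K| + 1) < B0 by rewrite -ltr_pdivlMr // ltr_wpDl.
  have e4 : 0 <= `|s| by [].
  move: e1 e2 e3 e4; set a := `|s|; set b := `|K|; set d := `|s * K|; move=> e1 e2 e3 e4.
  nra.
have hOkpos : forall s, Ok s -> pos_rates (ks kappa s).
  move=> s [h1 _] j; rewrite /ks; case: eqP => [->|_] //; by rewrite addr0.
have [s [[hO1 hO2] [hex hnd]]] := main_pert hN0 hrk hu hs hl (ltn0Sn C) (fun k hk => hcap k c hk) hOk hOkpos.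
exists (ks kappa s), c; split.
  split => //; split => //; exact: hOkpos.
by exists t; split.
Qed.
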